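(* Let $(\mathbf S,+,0,\mathscr F)$ be a semilattice with operators. (1) An ideal $I$ of $\mathbf S$ is the $0$-class of some congruence relation if and only if $f(I)\subseteq I$ for every $f\in\mathscr F$. (2) If the ideal $I$ is $\mathscr F$-closed, then the least congruence with $0$-class $I$ is $\eta(I)$, the semilattice congruence generated by $I$ (i.e., by collapsing $I$ to $0$), and it is characterized by: $x\,\eta(I)\,y$ iff $x+i=y+i$ for some $i\in I$. (3) If the ideal $I$ is $\mathscr F$-closed, there is also a greatest congruence $\tau(I)$ with $0$-class $I$, given by: $x\,\tau(I)\,y$ iff for every $h\in\mathscr F^\dagger$, $h(x)\in I\Leftrightarrow h(y)\in I$, where $\mathscr F^\dagger$ is the monoid of maps generated by $\mathscr F$ (including the identity).
   Context: A semilattice with operators $(\mathbf S,+,0,\mathscr F)$ is a join semilattice $(S,+)$ with least element $0$ together with a set $\mathscr F$ of unary maps $S\to S$ each preserving $+$ and $0$. Congruences are equivalence relations compatible with $+$ and every $f\in\mathscr F$. An ideal is a nonempty down-set closed under $+$. *)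

(* Defs.v *)
(* the semilattice is a join-semilattice with bottom
   (bJoinSemilatticeType); + is the join `|`, 0 is \bot. *)
From HB Require Import structures.
From mathcomp Require Import all_boot all_order.
Set Implicit Arguments. Unset Strict Implicit. Unset Printing Implicit Defensive.
Import Order.TTheory.
Local Open Scope order_scope.

Section SLO.
Context {d : Order.disp_t} {S : bJoinSemilatticeType d}.

Definition operators (F : (S -> S) -> Prop) : Prop :=
  forall f, F f -> (forall x y, f (x `|` y) = f x `|` f y) /\ f \bot = \bot.

Definition ideal (I : S -> Prop) : Prop :=
  (exists x, I x) /\
  (forall x y, x <= y -> I y -> I x) /\
  (forall x y, I x -> I y -> I (x `|` y)).

Definition F_closed (F : (S -> S) -> Prop) (I : S -> Prop) : Prop :=
  forall f, F f -> forall x, I x -> I (f x).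

Definition equivalence (R : S -> S -> Prop) : Prop :=
  (forall x, R x x) /\ (forall x y, R x y -> R y x) /\
  (forall x y z, R x y -> R y z -> R x z).

Definition sl_congruence (R : S -> S -> Prop) : Prop :=
  equivalence R /\
  (forall x y x' y', R x y -> R x' y' -> R (x `|` x') (y `|` y')).

Definition congruence (F : (S -> S) -> Prop) (R : S -> S -> Prop) : Prop :=
  sl_congruence R /\ (forall f, F f -> forall x y, R x y -> R (f x) (f y)).

Definition zero_class (R : S -> S -> Prop) (I : S -> Prop) : Prop :=
  forall x, R x \bot <-> I x.

Definition etaI (I : S -> Prop) (x y : S) : Prop :=
  forall R, sl_congruence R -> (forall i, I i -> R i \bot) -> R x y.

Inductive Fdag (F : (S -> S) -> Prop) : (S -> S) -> Prop :=
  | Fdag_id : Fdag F id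
  | Fdag_comp f h : F f -> Fdag F h -> Fdag F (f \o h).

Definition tauI (F : (S -> S) -> Prop) (I : S -> Prop) (x y : S) : Prop :=
  forall h, Fdag F h -> (I (h x) <-> I (h y)).

End SLO.

(* Main.v *)
Require Import Defs.
From HB Require Import structures.
From mathcomp Require Import all_boot all_order.
Import Order.TTheory.
Local Open Scope order_scope.

Section Aux.
Context {d : Order.disp_t} {S : bJoinSemilatticeType d}.
Variable (F : (S -> S) -> Prop).
Hypothesis HF : operators F.

Lemma Fdag_hom h : Fdag F h -> (forall x y, h (x `|` y) = h x `|` h y) /\ h \bot = \bot.
Proof.
elim=> [|f g Ff _ [IH1 IH2]]; first by split.
have [H1 H2] := HF f Ff.
split=> [x y|] /=; by rewrite ?IH1 ?IH2 ?H1 ?H2.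
Qed.

Lemma Fdag_compose h g : Fdag F h -> Fdag F g -> Fdag F (fun x => h (g x)).
Proof.
move=> Hh Hg; elim: Hh => [|f k Ff _ IH]; first exact: Hg.
exact: (Fdag_comp Ff IH).
Qed.

Lemma Fdag_closed I : F_closed F I -> forall h, Fdag F h -> forall x, I x -> I (h x).
Proof.
move=> Hc h; elim=> [//|f k Ff _ IH] x Ix /=.
exact: Hc _ Ff _ (IH _ Ix).
Qed.

Definition E (I : S -> Prop) (x y : S) := exists i, I i /\ x `|` i = y `|` i.

Lemma E_slc I : ideal I -> sl_congruence (E I).
Proof.
move=> [[i0 Hi0] [Hd Hj]]; split; first split.
- by move=> x; exists i0; split.
- split; first by move=> x y [i [Ii e]]; exists i; split; last exact: esym e.
  move=> x y z [i [Ii e1]] [j [Ij e2]]; exists (i `|` j); split; first exact: (Hj _ _ Ii Ij).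
  rewrite joinA e1 -joinA (joinC i j) joinA e2; exact: esym (joinA _ _ _).
move=> x y x' y' [i [Ii e1]] [j [Ij e2]]; exists (i `|` j); split; first exact: (Hj _ _ Ii Ij).
rewrite joinACA e1 e2; exact: joinACA.
Qed.

Lemma E_eta I : ideal I -> forall x y, etaI I x y <-> E I x y.
Proof.
move=> HI x y; split.
  move=> H; apply: H; first exact: E_slc.
  by move=> i Ii; exists i; rewrite joinxx join0x.
move=> [i [Ii e]] R [[Rr [Rs Rt]] Rj] RI.
have h1 : R x (x `|` i) by rewrite -{1}(joinx0 x); apply: Rj; [apply: Rr| apply: Rs; apply: RI].
have h2 : R (y `|` i) y by rewrite -{2}(joinx0 y); apply: Rj; [apply: Rr| apply: RI].
by apply: Rt h1 _; rewrite e.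
Qed.

Lemma E_zero I : ideal I -> zero_class (E I) I.
Proof.
move=> [_ [Hd _]] x; split.
  move=> [i [Ii e]]; rewrite join0x in e.
  by apply: Hd Ii; rewrite -e leUl.
by move=> Ix; exists x; rewrite joinxx join0x.
Qed.

End Aux.
Arguments E_slc {d S I}.
Arguments E_eta {d S I}.
Arguments E_zero {d S I}.

Theorem theorem5p1 (d : Order.disp_t) (S : bJoinSemilatticeType d)
  (F : (S -> S) -> Prop) (HF : operators F) :
  (* (1) *)
  (forall I : S -> Prop, ideal I ->
     ((exists R, congruence F R /\ zero_class R I) <-> F_closed F I)) /\
  (* (2) *)
  (forall I : S -> Prop, ideal I -> F_closed F I ->
     congruence F (etaI I) /\ zero_class (etaI I) I /\
     (forall R, congruence F R -> zero_class R I ->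
        forall x y, etaI I x y -> R x y) /\
     (forall x y, etaI I x y <-> exists i, I i /\ x `|` i = y `|` i)) /\
  (* (3) *)
  (forall I : S -> Prop, ideal I -> F_closed F I ->
     congruence F (tauI F I) /\ zero_class (tauI F I) I /\
     (forall R, congruence F R -> zero_class R I ->
        forall x y, R x y -> tauI F I x y)).
Proof.
have P2 : forall I : S -> Prop, ideal I -> F_closed F I ->
     congruence F (etaI I) /\ zero_class (etaI I) I /\
     (forall R, congruence F R -> zero_class R I ->
        forall x y, etaI I x y -> R x y) /\
     (forall x y, etaI I x y <-> exists i, I i /\ x `|` i = y `|` i).
  move=> I HI Hc.
  have [[Er [Es Et]] Ej] := E_slc HI.
  split; last split; last split.
  - split; first split; first split.
    + by move=> x; apply/(E_eta HI).
    + split.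
        by move=> x y /(E_eta HI) h; apply/(E_eta HI); apply: Es.
      by move=> x y z /(E_eta HI) h1 /(E_eta HI) h2; apply/(E_eta HI); apply: Et h2.
    + by move=> x y x' y' /(E_eta HI) h1 /(E_eta HI) h2; apply/(E_eta HI); apply: Ej.
    + move=> f Ff x y /(E_eta HI) [i [Ii e]]; apply/(E_eta HI).
      have [H1 _] := HF f Ff.
      by exists (f i); split; [exact: Hc| rewrite -!H1 e].
  - move=> x; split=> H.
      by apply/(E_zero HI); apply/(E_eta HI).
    by apply/(E_eta HI); apply/(E_zero HI).
  - move=> R [RS _] RZ x y H; apply: H => // i Ii; exact/RZ.
  - exact: E_eta.
split.
  move=> I HI; split.
    move=> [R [[[[Rr [Rs Rt]] _] Rf] RZ]] f Ff x Ix.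
    have [_ H0] := HF f Ff.
    by apply/RZ; rewrite -H0; apply: Rf => //; apply/RZ.
  move=> Hc; exists (etaI I); have [? [? _]] := P2 I HI Hc; by split.
split; first exact: P2.
move=> I [[i0 Hi0] [Hd Hj]] Hc.
have HIb : I \bot by apply: Hd Hi0; exact: le0x.
have HIU : forall x y, I (x `|` y) <-> I x /\ I y.
  move=> x y; split; last by move=> [? ?]; apply: Hj.
  by move=> H; split; apply: Hd H; [exact: leUl | exact: leUr].
split; last split.
- split; first split; first split.
  + by move=> x h _.
  + split; first by move=> x y H h Hh; split; move/(H h Hh).
    by move=> x y z H1 H2 h Hh; split => H; [apply/(H2 h Hh)/(H1 h Hh) | apply/(H1 h Hh)/(H2 h Hh)].
  + move=> x y x' y' H1 H2 h Hh.
    have [Hm _] := @Fdag_hom _ _ F HF h Hh.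
    rewrite !Hm; split=> /HIU [a b]; apply/HIU; split.
    - exact: (proj1 (H1 h Hh) a).
    - exact: (proj1 (H2 h Hh) b).
    - exact: (proj2 (H1 h Hh) a).
    - exact: (proj2 (H2 h Hh) b).
  + move=> f Ff x y H h Hh.
    exact: (H (fun z => h (f z)) (@Fdag_compose _ _ F h f Hh (Fdag_comp Ff (Fdag_id F)))).
- move=> x; split.
    by move=> H; apply/(H id (Fdag_id F)).
  move=> Ix h Hh; have [_ H0] := @Fdag_hom _ _ F HF h Hh; rewrite H0; split=> // _.
  exact: (@Fdag_closed _ _ F I Hc h Hh x Ix).
- move=> R [[[Rr [Rs Rt]] Rj] Rf] RZ x y Rxy h Hh.
  have Rh : R (h x) (h y).
    elim: Hh {RZ} => [//|f k Ff _ IH]; exact: Rf _ Ff _ _ IH.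
  split=> H; apply/RZ.
    by apply: Rt (Rs _ _ Rh) _; apply/RZ.
  by apply: Rt Rh _; apply/RZ.
Qed.
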